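(* Let $(\Omega,\mathcal{F})$ be a measurable space and $\mathcal{P}=\{P_1,\dots,P_K\}$ ($K\ge2$) a finite set of probability measures on it, with $\hat{\mathbb{E}}[Z]=\max_{1\le i\le K}E_{P_i}[Z]$. Let $X,Y$ be random variables with $\hat{\mathbb{E}}[X^2]+\hat{\mathbb{E}}[Y^2]<\infty$. Then $$\overline{C}(X,Y)=\max_{1\le i<j\le K}\overline{C}_{ij}(X,Y),$$ where $\overline{C}_{ij}(X,Y)$ denotes the upper covariance of $X$ and $Y$ under the two-element set $\{P_i,P_j\}$.
   Context: For a set $\mathcal{Q}$ of probability measures with $\hat{\mathbb{E}}_{\mathcal{Q}}[Z]=\sup_{P\in\mathcal{Q}}E_P[Z]$ and a random variable $W$ with $\hat{\mathbb{E}}_{\mathcal{Q}}[W^2]<\infty$: $\overline{\mu}_W=\hat{\mathbb{E}}_{\mathcal{Q}}[W]$, $\underline{\mu}_W=-\hat{\mathbb{E}}_{\mathcal{Q}}[-W]$, $M_W=[\underline{\mu}_W,\overline{\mu}_W]$, and the upper covariance under $\mathcal{Q}$ is $\max_{\mu_2\in M_Y}\min_{\mu_1\in M_X}\hat{\mathbb{E}}_{\mathcal{Q}}[(X-\mu_1)(Y-\mu_2)]$. $\overline{C}(X,Y)$ is this quantity for $\mathcal{Q}=\mathcal{P}$ and $\overline{C}_{ij}(X,Y)$ for $\mathcal{Q}=\{P_i,P_j\}$. *)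

(* Defs.v *)
From HB Require Import structures.
From mathcomp Require Import all_boot all_order all_algebra.
From mathcomp Require Import all_classical all_reals all_analysis.
Set Implicit Arguments. Unset Strict Implicit. Unset Printing Implicit Defensive.
Import Order.TTheory GRing.Theory Num.Theory.
Local Open Scope classical_set_scope.
Local Open Scope ring_scope.

Definition Eup d (T : measurableType d) (R : realType) (K : nat)
  (P : 'I_K -> probability T R) (S : {set 'I_K}) (Z : T -> R) : \bar R :=
  (\big[maxe/-oo]_(i in S) \int[P i]_w (Z w)%:E)%E.

Definition mu_up d (T : measurableType d) (R : realType) (K : nat)
  (P : 'I_K -> probability T R) (S : {set 'I_K}) (W : T -> R) : \bar R :=
  Eup P S W.
Definition mu_low d (T : measurableType d) (R : realType) (K : nat)
  (P : 'I_K -> probability T R) (S : {set 'I_K}) (W : T -> R) : \bar R :=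
  (- Eup P S (fun w => (- W w)%R))%E.
Definition Mint d (T : measurableType d) (R : realType) (K : nat)
  (P : 'I_K -> probability T R) (S : {set 'I_K}) (W : T -> R) : set R :=
  [set m : R | (mu_low P S W <= m%:E)%E /\ (m%:E <= mu_up P S W)%E].

(* upper covariance: max_{mu2 in M_Y} min_{mu1 in M_X} Eup[(X-mu1)(Y-mu2)]
   (max/min rendered as sup/inf; they are attained). *)
Definition ucov d (T : measurableType d) (R : realType) (K : nat)
  (P : 'I_K -> probability T R) (S : {set 'I_K}) (X Y : T -> R) : \bar R :=
  ereal_sup ((fun m2 : R =>
     ereal_inf ((fun m1 : R => Eup P S (fun w => (X w - m1) * (Y w - m2)))
                   @` Mint P S X)) @` Mint P S Y).

(* Main.v *)
Require Import Defs.
From HB Require Import structures.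
From mathcomp Require Import all_boot all_order all_algebra.
From mathcomp Require Import all_classical all_reals all_analysis.
From mathcomp Require Import ring lra measurable_realfun.
Set Implicit Arguments. Unset Strict Implicit. Unset Printing Implicit Defensive.
Import Order.TTheory GRing.Theory Num.Theory.
Local Open Scope classical_set_scope.
Local Open Scope ring_scope.
Definition Aset (R : realType) (K : nat) (S : {set 'I_K}) (a : 'I_K -> R) : set R :=
  [set m | (exists2 i, i \in S & a i <= m) /\ (exists2 j, j \in S & m <= a j)].
Definition gf (R : realType) (K : nat) (a b c : 'I_K -> R) (x y : R) (k : 'I_K) : R :=
  c k - x * b k - y * a k + x * y.
Definition Gf (R : realType) (K : nat) (S : {set 'I_K}) (a b c : 'I_K -> R) (x y : R) : \bar R :=
  (\big[maxe/-oo]_(k in S) (gf a b c x y k)%:E)%E.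
Definition ucovF (R : realType) (K : nat) (S : {set 'I_K}) (a b c : 'I_K -> R) : \bar R :=
  ereal_sup ((fun y => ereal_inf ((fun x => Gf S a b c x y) @` Aset S a)) @` Aset S b).
Definition Qf (R : realType) (K : nat) (a b c : 'I_K -> R) (i j : 'I_K) (t : R) : R :=
  t * c i + (1 - t) * c j - (t * a i + (1 - t) * a j) * (t * b i + (1 - t) * b j).

Lemma lowerL (R : realType) (K : nat) (S : {set 'I_K}) (a b c : 'I_K -> R) i j t :
  i \in S -> j \in S -> 0 <= t <= 1 -> ((Qf a b c i j t)%:E <= ucovF S a b c)%E.
Proof.
move=> iS jS /andP[t0 t1].
set y := t * b i + (1 - t) * b j.
have yA : Aset S b y.
  have [bij|bji] := leP (b i) (b j).
    split; [exists i => //|exists j => //]; rewrite /y; nra.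
  split; [exists j => //|exists i => //]; rewrite /y; nra.
apply: le_trans (ereal_sup_ubound _); last by exists y.
apply: le_ereal_inf_tmp => _ [x _ <-].
have E : t * gf a b c x y i + (1 - t) * gf a b c x y j = Qf a b c i j t.
  rewrite /gf /Qf /y; ring.
rewrite /Gf.
have [gij|gji] := leP (gf a b c x y i) (gf a b c x y j).
  apply: (bigmax_sup j) => //; rewrite lee_fin -E; nra.
apply: (bigmax_sup i) => //; rewrite lee_fin -E; nra.
Qed.

Lemma key_ineq (R : realType) (t gk gj Q m : R) :
  0 < t -> t * gk + (1 - t) * gj = Q -> Q <= m -> gj = m -> gk <= m.
Proof. move=> t0 E Qm gjm; subst; nra. Qed.

Lemma upperU (R : realType) (K : nat) (S : {set 'I_K}) (a b c : 'I_K -> R) (M : \bar R) i0 :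
  i0 \in S ->
  (forall i j t, i \in S -> j \in S -> 0 <= t <= 1 -> ((Qf a b c i j t)%:E <= M)%E) ->
  (ucovF S a b c <= M)%E.
Proof.
move=> i0S.
case: M => [m| |] H; last 2 first.
- by rewrite leey.
- by have := H i0 i0 1 i0S i0S; rewrite ler01 lexx => /(_ isT).
have vm : forall k, k \in S -> c k - a k * b k <= m.
  move=> k kS; have := H k k 1 kS kS; rewrite ler01 lexx lee_fin => /(_ isT).
  suff -> : Qf a b c k k 1 = c k - a k * b k by [].
  by rewrite /Qf; ring.
have [imin iminS iminP] : exists2 i, i \in S & forall j, j \in S -> a i <= a j.
  by case: (@arg_minP _ _ _ i0 (fun i => i \in S) a) => // i iS Hi; exists i.
apply: ge_ereal_sup => _ [y _ <-].
pose s k := y - b k.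
pose v k := c k - a k * b k.
pose w k := (m - v k) / s k.
pose l k := a k + w k.
pose x := \big[Num.max/a imin]_(j | (j \in S) && (s j < 0)) l j.
have F1 : a imin <= x by apply: bigmax_ge_id.
have F2 : forall j, j \in S -> s j < 0 -> l j <= x.
  by move=> j jS sj; apply: le_bigmax_cond; rewrite jS sj.
have F3 : x = a imin \/ exists2 j, (j \in S) && (s j < 0) & x = l j.
  rewrite /x; elim/big_ind: _ => //.
  - by left.
  - move=> x1 x2 h1 h2; rewrite maxEle; by case: ifP.
  - by move=> j Pj; right; exists j.
have ws : forall k, s k != 0 -> w k * s k = m - v k.
  by move=> k sk; rewrite /w divfK.
have gE : forall k, gf a b c x y k = v k + s k * (x - a k).
  by move=> k; rewrite /gf /v /s; ring.
have xA : Aset S a x.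
  split; first by exists imin.
  case: F3 => [->|[j /andP[jS sj] ->]]; first by exists imin.
  exists j => //; rewrite /l.
  have := ws j (ltr0_neq0 sj); have := vm j jS; rewrite -/(v j) => h1 h2.
  nra.
apply: ge_ereal_inf; exists (Gf S a b c x y); first by exists x.
apply: bigmax_le; first exact: leNye.
move=> k kS; rewrite lee_fin.
rewrite gE.
have vk := vm k kS; rewrite -/(v k) in vk.
have [sk|sk] := ltP (s k) 0.
  have := F2 k kS sk; have := ws k (ltr0_neq0 sk); rewrite /l => h1 h2.
  nra.
case: F3 => [xlo|[j /andP[jS sj] xl]].
  have := iminP k kS; rewrite xlo => h; nra.
have D0 : 0 < s k - s j by lra.
pose t := - s j / (s k - s j).
have tD : t * (s k - s j) = - s j by rewrite /t divfK // gt_eqF.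
have t0 : 0 < t by rewrite /t divr_gt0 // oppr_gt0.
have t1 : t <= 1 by nra.
have HQ := H k j t kS jS; rewrite (ltW t0) t1 lee_fin in HQ; have {}HQ := HQ isT.
have Eid : t * gf a b c x y k + (1 - t) * gf a b c x y j =
   Qf a b c k j t + (x - (t * a k + (1 - t) * a j)) * (t * s k + (1 - t) * s j).
  by rewrite /gf /Qf /s; ring.
have st : t * s k + (1 - t) * s j = 0 by lra.
rewrite st mulr0 addr0 in Eid.
rewrite -gE; apply: (key_ineq t0 Eid HQ).
rewrite gE xl /l; have := ws j (ltr0_neq0 sj); lra.
Qed.

Lemma finite_main (R : realType) (K : nat) (a b c : 'I_K -> R) : (1 < K)%N ->
  ucovF [set: 'I_K] a b c =
  (\big[maxe/-oo]_(i : 'I_K) \big[maxe/-oo]_(j : 'I_K | (i < j)%N)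
      ucovF [set i; j] a b c)%E.
Proof.
move=> K1.
set RHS := (\big[maxe/-oo]_(i : 'I_K) _)%E.
have Hlt : forall (i j : 'I_K) (t : R), (i < j)%N -> 0 <= t <= 1 -> ((Qf a b c i j t)%:E <= RHS)%E.
  move=> i j t ij tt; apply: (bigmax_sup i) => //; apply: (bigmax_sup j) => //.
  by apply: lowerL => //; rewrite !inE eqxx ?orbT.
have Hne : forall (i j : 'I_K) (t : R), i != j -> 0 <= t <= 1 -> ((Qf a b c i j t)%:E <= RHS)%E.
  move=> i j t; case: (ltngtP i j) => ij.
  - by move=> _; exact: Hlt.
  - move=> _ /andP[t0 t1].
    have -> : Qf a b c i j t = Qf a b c j i (1 - t) by rewrite /Qf; ring.
    by apply: Hlt => //; apply/andP; split; lra.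
  - by move=> /eqP h; exfalso; apply: h; apply: val_inj.
have Hall : forall (i j : 'I_K) (t : R), 0 <= t <= 1 -> ((Qf a b c i j t)%:E <= RHS)%E.
  move=> i j t tt; have [->|ij] := eqVneq i j; last exact: Hne.
  have [k kj] : exists k : 'I_K, k != j.
    have K0 : (0 < K)%N by apply: ltnW.
    case: (eqVneq (val j) 0%N) => j0.
      by exists (Ordinal K1); apply/eqP => /(congr1 val) /=; rewrite j0.
    by exists (Ordinal K0); apply/eqP => /(congr1 val) /= h; move/eqP: j0; apply; exact: (esym h).
  have -> : Qf a b c j j t = Qf a b c j k 1 by rewrite /Qf; ring.
  by apply: Hne; [rewrite eq_sym|rewrite ler01 lexx].
apply/le_anti/andP; split.
  have K0 : (0 < K)%N by apply: ltnW.
  apply: (@upperU _ _ _ _ _ _ _ (Ordinal K0)); first by rewrite inE.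
  by move=> i j t _ _; exact: Hall.
apply: bigmax_le; first exact: leNye.
move=> i _; apply: bigmax_le; first exact: leNye.
move=> j ij; apply: (@upperU _ _ _ _ _ _ _ i); first by rewrite !inE eqxx.
by move=> i' j' t _ _ tt; apply: lowerL; rewrite ?inE.
Qed.
Lemma integral_lin3 d (T : measurableType d) (R : realType) (P : probability T R)
  (f1 f2 f3 : T -> R) (k1 k2 k3 l : R) :
  P.-integrable setT (EFin \o f1) -> P.-integrable setT (EFin \o f2) ->
  P.-integrable setT (EFin \o f3) ->
  (\int[P]_w (k1 * f1 w + k2 * f2 w + k3 * f3 w + l)%:E =
   (k1 * fine (\int[P]_w (f1 w)%:E) + k2 * fine (\int[P]_w (f2 w)%:E)
    + k3 * fine (\int[P]_w (f3 w)%:E) + l)%:E)%E.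
Proof.
move=> i1 i2 i3.
have ic : P.-integrable setT (fun w => (cst l w)%:E).
  exact: finite_measure_integrable_cst.
have j1 : P.-integrable setT (fun w => k1%:E * (f1 w)%:E)%E by exact: integrableZl.
have j2 : P.-integrable setT (fun w => k2%:E * (f2 w)%:E)%E by exact: integrableZl.
have j3 : P.-integrable setT (fun w => k3%:E * (f3 w)%:E)%E by exact: integrableZl.
have -> : (fun w => (k1 * f1 w + k2 * f2 w + k3 * f3 w + l)%:E) =
    (fun w => k1%:E * (f1 w)%:E + (k2%:E * (f2 w)%:E + (k3%:E * (f3 w)%:E + (cst l w)%:E)))%E.
  by apply: funext => w; rewrite /= -!EFinM -!EFinD !addrA.
rewrite integralD //; last first.
  apply: integrableD => //; exact: integrableD.
rewrite integralD //; last exact: integrableD.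
rewrite integralD //.
rewrite !integralZl //.
rewrite (_ : (\int[P]_w (cst l w)%:E)%E = l%:E); last first.
  transitivity (l%:E * P [set: T])%E; first exact: (integral_cst P measurableT l%:E).
  by rewrite probability_setT mule1.
have e1 : (fine (\int[P]_w (f1 w)%:E))%:E = (\int[P]_w (f1 w)%:E)%E.
  by rewrite fineK //; exact: (integrable_fin_num _ i1).
have e2 : (fine (\int[P]_w (f2 w)%:E))%:E = (\int[P]_w (f2 w)%:E)%E.
  by rewrite fineK //; exact: (integrable_fin_num _ i2).
have e3 : (fine (\int[P]_w (f3 w)%:E))%:E = (\int[P]_w (f3 w)%:E)%E.
  by rewrite fineK //; exact: (integrable_fin_num _ i3).
by rewrite !EFinD !EFinM e1 e2 e3 !addeA.
Qed.

Lemma int_sq d (T : measurableType d) (R : realType) (P : probability T R) (X : T -> R) :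
  measurable_fun setT X -> (\int[P]_w (X w ^+ 2)%:E < +oo)%E ->
  P.-integrable setT (EFin \o (fun w => X w ^+ 2)).
Proof.
move=> mX fin; apply/integrableP; split.
  by apply/measurable_EFinP; exact: measurable_funX.
under eq_integral => w _ do rewrite abse_EFin ger0_norm ?sqr_ge0 //.
exact: fin.
Qed.

Lemma int_X d (T : measurableType d) (R : realType) (P : probability T R) (X : T -> R) :
  measurable_fun setT X -> (\int[P]_w (X w ^+ 2)%:E < +oo)%E ->
  P.-integrable setT (EFin \o X).
Proof.
move=> mX fin.
apply: (@le_integrable _ _ _ _ _ measurableT _ (EFin \o (fun w => X w ^+ 2 + 1))).
- by apply/measurable_EFinP.
- move=> w _ /=; rewrite lee_fin.
  have h := real_normK (num_real (X w)); have h0 := normr_ge0 (X w).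
  rewrite [X in _ <= X]ger0_norm; last by rewrite addr_ge0 // sqr_ge0.
  nra.
have -> : EFin \o (fun w => X w ^+ 2 + 1) = (EFin \o (fun w => X w ^+ 2)) \+ (EFin \o cst 1).
  by apply: funext => w; rewrite /= EFinD.
apply: integrableD => //; first exact: int_sq.
exact: finite_measure_integrable_cst.
Qed.

Lemma int_XY d (T : measurableType d) (R : realType) (P : probability T R) (X Y : T -> R) :
  measurable_fun setT X -> measurable_fun setT Y ->
  (\int[P]_w (X w ^+ 2)%:E < +oo)%E -> (\int[P]_w (Y w ^+ 2)%:E < +oo)%E ->
  P.-integrable setT (EFin \o (fun w => X w * Y w)).
Proof.
move=> mX mY fX fY.
apply: (@le_integrable _ _ _ _ _ measurableT _ (EFin \o (fun w => X w ^+ 2 + Y w ^+ 2))).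
- by apply/measurable_EFinP; exact: measurable_funM.
- move=> w _ /=; rewrite lee_fin normrM.
  have hx := real_normK (num_real (X w)); have hx0 := normr_ge0 (X w).
  have hy := real_normK (num_real (Y w)); have hy0 := normr_ge0 (Y w).
  rewrite [X in _ <= X]ger0_norm; last by rewrite addr_ge0 // sqr_ge0.
  nra.
have -> : EFin \o (fun w => X w ^+ 2 + Y w ^+ 2) =
   (EFin \o (fun w => X w ^+ 2)) \+ (EFin \o (fun w => Y w ^+ 2)).
  by apply: funext => w; rewrite /= EFinD.
by apply: integrableD => //; exact: int_sq.
Qed.

Lemma le_bigmaxeP (R : realType) (K : nat) (S : {set 'I_K}) (F : 'I_K -> R) (x : R) :
  ((x%:E <= \big[maxe/-oo]_(i in S) (F i)%:E)%E) <-> exists2 i, i \in S & x <= F i.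
Proof.
split.
- case: (set_0Vmem S) => [->|[j jS]].
    by rewrite big_set0.
  have [i0 i0S ->] := @eq_bigmax _ _ _ -oo%E j (fun i => i \in S) (fun i => (F i)%:E) jS
     (fun i _ => leNye _).
  by rewrite lee_fin => h; exists i0.
- by move=> [i iS h]; apply: (bigmax_sup i) => //; rewrite lee_fin.
Qed.

Unset Implicit Arguments.

Theorem proposition4p2 (d : measure_display) (T : measurableType d)
  (R : realType) (K : nat) (P : 'I_K -> probability T R) (X Y : T -> R) :
  (1 < K)%N -> injective P ->
  measurable_fun setT X -> measurable_fun setT Y ->
  (Eup P [set: 'I_K] (fun w => (X w ^+ 2)%R) + Eup P [set: 'I_K] (fun w => (Y w ^+ 2)%R)
     < +oo)%E ->
  ucov P [set: 'I_K] X Y =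
  (\big[maxe/-oo]_(i : 'I_K) \big[maxe/-oo]_(j : 'I_K | (i < j)%N)
      ucov P [set i; j] X Y)%E.
Proof.
move=> K1 _ mX mY fin.
have Eup0 : forall W : T -> R, (0 <= Eup P [set: 'I_K] (fun w => (W w ^+ 2)%R))%E.
  move=> W; have K0 : (0 < K)%N by apply: ltnW.
  apply: (bigmax_sup (Ordinal K0)); first by rewrite inE.
  by apply: integral_ge0 => w _; rewrite lee_fin sqr_ge0.
have finX : forall i, (\int[P i]_w (X w ^+ 2)%:E < +oo)%E.
  move=> i; apply: le_lt_trans fin.
  apply: le_trans (leeDl _ (Eup0 Y)).
  by apply: (bigmax_sup i) => //; rewrite inE.
have finY : forall i, (\int[P i]_w (Y w ^+ 2)%:E < +oo)%E.
  move=> i; apply: le_lt_trans fin.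
  rewrite addeC; apply: le_trans (leeDl _ (Eup0 X)).
  by apply: (bigmax_sup i) => //; rewrite inE.
have iX : forall i, (P i).-integrable setT (EFin \o X) by move=> i; exact: int_X.
have iY : forall i, (P i).-integrable setT (EFin \o Y) by move=> i; exact: int_X.
have iXY : forall i, (P i).-integrable setT (EFin \o (fun w => X w * Y w)).
  by move=> i; exact: int_XY.
pose a i := fine (\int[P i]_w (X w)%:E).
pose b i := fine (\int[P i]_w (Y w)%:E).
pose c i := fine (\int[P i]_w (X w * Y w)%:E).
have MintE : forall (S : {set 'I_K}) (W : T -> R), (forall i, (P i).-integrable setT (EFin \o W)) ->
    Mint P S W = Aset S (fun i => fine (\int[P i]_w (W w)%:E)).
  move=> S W iW.
  have upE : mu_up P S W = (\big[maxe/-oo]_(i in S) (fine (\int[P i]_w (W w)%:E))%:E)%E.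
    rewrite /mu_up /Eup; apply: eq_bigr => i _.
    by rewrite fineK //; exact: (integrable_fin_num _ (iW i)).
  have lowE : mu_low P S W = (- \big[maxe/-oo]_(i in S) (- fine (\int[P i]_w (W w)%:E))%:E)%E.
    rewrite /mu_low /Eup; congr (- _)%E; apply: eq_bigr => i _.
    rewrite (eq_integral (fun w => (-1 * W w + 0 * W w + 0 * W w + 0)%:E)); last first.
      by move=> w _; congr EFin; ring.
    rewrite integral_lin3 //; congr EFin; ring.
  rewrite /Mint upE lowE; apply/seteqP; split => m /= [h1 h2].
  - split; last by apply/le_bigmaxeP.
    move: h1; rewrite leeNl -EFinN => /le_bigmaxeP [i iS h]; exists i => //; lra.
  - split; last by apply/le_bigmaxeP.
    rewrite leeNl -EFinN; apply/le_bigmaxeP.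
    case: h1 => i iS h; exists i => //; lra.
have EupE : forall (S : {set 'I_K}) m1 m2,
    Eup P S (fun w => (X w - m1) * (Y w - m2)) = Gf S a b c m1 m2.
  move=> S m1 m2; rewrite /Eup /Gf; apply: eq_bigr => i _.
  rewrite (eq_integral (fun w => (1 * (X w * Y w) + (- m2) * X w + (- m1) * Y w + m1 * m2)%:E)); last first.
    by move=> w _; congr EFin; ring.
  rewrite integral_lin3 //; congr EFin; rewrite /gf /a /b /c; ring.
have ucovE : forall S : {set 'I_K}, ucov P S X Y = ucovF S a b c.
  move=> S.
  have MX : Mint P S X = Aset S a := MintE S X iX.
  have MY : Mint P S Y = Aset S b := MintE S Y iY.
  rewrite /ucov MX MY /ucovF.
  have E2 : (fun m2 => ereal_inf [set Eup P S (fun w => (X w - m1) * (Y w - m2)) | m1 in Aset S a])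
      = (fun m2 => ereal_inf [set Gf S a b c m1 m2 | m1 in Aset S a]).
    apply: funext => m2.
    have -> : (fun m1 => Eup P S (fun w => (X w - m1) * (Y w - m2))) = (fun m1 => Gf S a b c m1 m2).
      by apply: funext => m1; exact: EupE.
    by [].
  by rewrite E2.
rewrite ucovE finite_main //.
apply: eq_bigr => i _; apply: eq_bigr => j _; exact: (esym (ucovE _)).
Qed.
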